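(* Let $n\ge 2$, $\theta\in[0,1]$, and $C(\mathbf u)=\theta\prod_{i=1}^n u_i+(1-\theta)\min\{u_1,\dots,u_n\}$ for $\mathbf u\in[0,1]^n$. Then $C$ is $I(\mathbf 1)$ and $I(-\mathbf 1)$, where $\mathbf 1=(1,\dots,1)$.
   Context: For $\alpha\in\{-1,1\}^n$ and a random vector $\mathbf X$, write $\alpha\mathbf X=(\alpha_1X_1,\dots,\alpha_nX_n)$; inequalities between vectors are componentwise. $\mathbf X$ is $I(\alpha)$ if for every $\mathbf x\in\mathbb R^n$, $\mathbb P[\alpha\mathbf X>\mathbf x\mid \alpha\mathbf X>\mathbf x']\le \mathbb P[\alpha\mathbf X>\mathbf x\mid \alpha\mathbf X>\mathbf x'']$ whenever $\mathbf x'\le\mathbf x''$ and $\mathbb P[\alpha\mathbf X>\mathbf x'']>0$. A copula is $I(\alpha)$ if a random vector with that distribution function is. *)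

(* Defs.v *)
From HB Require Import structures.
From mathcomp Require Import all_boot all_order all_algebra.
From mathcomp Require Import all_classical all_reals all_analysis.
Set Implicit Arguments. Unset Strict Implicit. Unset Printing Implicit Defensive.
Import Order.TTheory GRing.Theory Num.Theory.
Local Open Scope classical_set_scope.
Local Open Scope ring_scope.

(* The function C(u) = theta * prod_i u_i + (1 - theta) * min_i u_i on [0,1]^n
   (the min over a nonempty index set; the neutral element 1 is harmless on [0,1]). *)
Definition copC {R : realType} (n : nat) (theta : R) (u : 'I_n -> R) : R :=
  theta * \prod_(i < n) u i + (1 - theta) * \big[Num.min/1]_(i < n) u i.

Definition clamp01 {R : realType} (x : R) : R := Num.max 0 (Num.min x 1).

(* The distribution function on R^n of a random vector whose distribution function
   restricted to [0,1]^n is the copula C (uniform margins): H(x) = C(clamp x). *)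
Definition copula_df {R : realType} (n : nat) (C : ('I_n -> R) -> R) (x : 'I_n -> R) : R :=
  C (fun i => clamp01 (x i)).

Definition has_df {d} {T : measurableType d} {R : realType} (P : probability T R)
  (n : nat) (X : 'I_n -> {RV P >-> R}) (H : ('I_n -> R) -> R) : Prop :=
  forall x : 'I_n -> R, P [set t | forall i, X i t <= x i] = (H x)%:E.

Definition gtEv {d} {T : measurableType d} {R : realType} (P : probability T R)
  (n : nat) (alpha : 'I_n -> R) (X : 'I_n -> {RV P >-> R}) (x : 'I_n -> R) : set T :=
  [set t | forall i, x i < alpha i * X i t].

Definition condP {d} {T : measurableType d} {R : realType} (P : probability T R)
  (A B : set T) : R := fine (P (A `&` B)) / fine (P B).

Definition I_alpha {d} {T : measurableType d} {R : realType} (P : probability T R)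
  (n : nat) (alpha : 'I_n -> R) (X : 'I_n -> {RV P >-> R}) : Prop :=
  forall x x' x'' : 'I_n -> R,
    (forall i, x' i <= x'' i) ->
    (0 < P (gtEv alpha X x''))%E ->
    condP P (gtEv alpha X x) (gtEv alpha X x') <=
    condP P (gtEv alpha X x) (gtEv alpha X x'').

(* A copula C (on n coordinates) is I(alpha): a (here: every) random vector with
   distribution function C is I(alpha). *)
Definition copula_I_alpha {R : realType} (n : nat) (C : ('I_n -> R) -> R)
  (alpha : 'I_n -> R) : Prop :=
  forall (d : measure_display) (T : measurableType d) (P : probability T R)
         (X : 'I_n -> {RV P >-> R}),
    has_df X (copula_df C) -> I_alpha alpha X.

(* Main.v *)
Require Import Defs.
From HB Require Import structures.
From mathcomp Require Import all_boot all_order all_algebra.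
From mathcomp Require Import all_classical all_reals all_analysis.
From mathcomp Require Import ring lra.
Import Order.TTheory GRing.Theory Num.Theory.
Set Implicit Arguments. Unset Strict Implicit.
Local Open Scope ring_scope.
Section Alg.
Variable R : realType.
Implicit Types (e c : R).

Lemma bmin_le (I : eqType) (r : seq I) (P : pred I) (f : I -> R) e j :
  j \in r -> P j -> \big[Num.min/e]_(i <- r | P i) f i <= f j.
Proof.
elim: r => // a r IH; rewrite inE big_cons => /orP[/eqP<-|jr] Pj.
  by rewrite Pj ge_min lexx.
by case: ifP => _; [rewrite ge_min IH ?orbT | exact: IH].
Qed.

Lemma bmin_lee (I : Type) (r : seq I) (P : pred I) (f : I -> R) e :
  \big[Num.min/e]_(i <- r | P i) f i <= e.
Proof.
elim: r => [|a r IH]; first by rewrite big_nil.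
by rewrite big_cons; case: ifP => _ //; rewrite ge_min IH orbT.
Qed.

Lemma bmin_ge (I : Type) (r : seq I) (P : pred I) (f : I -> R) e c :
  c <= e -> (forall i, P i -> c <= f i) -> c <= \big[Num.min/e]_(i <- r | P i) f i.
Proof.
move=> ce cf; apply: (big_ind (fun z => c <= z)) => //.
by move=> a b ca cb; rewrite le_min ca cb.
Qed.

Lemma bmax_le (I : eqType) (r : seq I) (P : pred I) (f : I -> R) e j :
  j \in r -> P j -> f j <= \big[Num.max/e]_(i <- r | P i) f i.
Proof.
elim: r => // a r IH; rewrite inE big_cons => /orP[/eqP<-|jr] Pj.
  by rewrite Pj le_max lexx.
by case: ifP => _; [rewrite le_max IH ?orbT | exact: IH].
Qed.

Lemma bmax_lee (I : Type) (r : seq I) (P : pred I) (f : I -> R) e :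
  e <= \big[Num.max/e]_(i <- r | P i) f i.
Proof.
elim: r => [|a r IH]; first by rewrite big_nil.
by rewrite big_cons; case: ifP => _ //; rewrite le_max IH orbT.
Qed.

Lemma bmax_ge (I : Type) (r : seq I) (P : pred I) (f : I -> R) e c :
  e <= c -> (forall i, P i -> f i <= c) -> \big[Num.max/e]_(i <- r | P i) f i <= c.
Proof.
move=> ce cf; apply: (big_ind (fun z => z <= c)) => //.
by move=> a b ca cb; rewrite ge_max ca cb.
Qed.

Lemma prod_ineq (I : Type) (r : seq I) (P : pred I) (u v : I -> R) :
  (forall i, 0 <= u i) -> (forall i, 0 <= v i) ->
  [/\ 0 <= \prod_(i <- r | P i) Num.min (u i) (v i),
      \prod_(i <- r | P i) Num.min (u i) (v i) <= \prod_(i <- r | P i) u i,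
      \prod_(i <- r | P i) Num.min (u i) (v i) <= \prod_(i <- r | P i) v i &
      \prod_(i <- r | P i) u i + \prod_(i <- r | P i) v i <=
      \prod_(i <- r | P i) Num.min (u i) (v i) + \prod_(i <- r | P i) Num.max (u i) (v i)].
Proof.
move=> u0 v0; elim: r => [|a r [IH1 IH2 IH3 IH4]].
  by rewrite !big_nil; split => //; lra.
rewrite !big_cons; case: ifP => _; last by split.
have ua := u0 a; have va := v0 a.
set E := \prod_(i <- r | P i) Num.max _ _ in IH4 *.
set D := \prod_(i <- r | P i) Num.min _ _ in IH1 IH2 IH3 IH4 *.
set U := \prod_(i <- r | P i) u i in IH2 IH4 *.
set V := \prod_(i <- r | P i) v i in IH3 IH4 *.
case: (leP (u a) (v a)) => h.
- split; [exact: mulr_ge0|exact: ler_wpM2l|nra|nra].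
- split; [exact: mulr_ge0|nra|exact: ler_wpM2l|nra].
Qed.


Definition bm n (w : 'I_n -> R) := \big[Num.min/1]_(i < n) w i.
Definition pr n (w : 'I_n -> R) := \prod_(i < n) w i.

Lemma bm_le n (w : 'I_n -> R) j : bm w <= w j.
Proof. exact: bmin_le (mem_index_enum j) isT. Qed.

Lemma bm_le1 n (w : 'I_n -> R) : bm w <= 1.
Proof. exact: bmin_lee. Qed.

Lemma bm_ge n (w : 'I_n -> R) c : c <= 1 -> (forall i, c <= w i) -> c <= bm w.
Proof. by move=> c1 cw; apply: bmin_ge. Qed.

Lemma bm_arg n (w : 'I_n -> R) : (0 < n)%N -> (forall i, w i <= 1) ->
  exists i0, bm w = w i0.
Proof.
case: n w => // n w _ w1.
case: (@arg_minP _ _ _ (@ord0 n) xpredT w isT) => j _ Hj.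
exists j; apply: le_anti; rewrite bm_le /=.
by apply: bm_ge => // i; apply: Hj.
Qed.

Lemma cross n (u v : 'I_n -> R) : (0 < n)%N ->
  (forall i, 0 <= u i <= 1) -> (forall i, 0 <= v i <= 1) -> bm u <= bm v ->
  pr u * bm v + pr v * bm u <=
  pr (fun i => Num.min (u i) (v i)) * bm v + pr (fun i => Num.max (u i) (v i)) * bm u.
Proof.
move=> n0 hu hv muv.
have u0 i : 0 <= u i by case/andP: (hu i).
have v0 i : 0 <= v i by case/andP: (hv i).
have [i0 Hi0] := bm_arg n0 (fun i => proj2 (andP (hu i))).
have mv := bm_le v i0.
have ui0 : u i0 <= v i0 by rewrite -Hi0 (le_trans muv).
rewrite /pr (bigD1 i0) //= (bigD1 i0 (F := v)) //= (bigD1 i0 (F := fun i => Num.min _ _)) //=.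
rewrite (bigD1 i0 (F := fun i => Num.max _ _)) //=.
have [h1 h2 h3 h4] := prod_ineq (index_enum 'I_n) (fun i => i != i0) u0 v0.
move: h1 h2 h3 h4; rewrite Hi0.
move: (\prod_(i <- _ | i != i0) Num.min (u i) (v i)) => B.
move: (\prod_(i <- _ | i != i0) Num.max (u i) (v i)) => E.
move: (\prod_(i <- _ | i != i0) u i) => A.
move: (\prod_(i <- _ | i != i0) v i) => V.
rewrite (min_idPl ui0) (max_idPr ui0).
move=> h1 h2 h3 h4.
have := u0 i0; have := v0 i0; move: (bm v) mv => m mv.
move: (u i0) (v i0) ui0 mv => x y xy my x0 y0.
have k1 : 0 <= x * ((y - m) * (A - B)) by apply: mulr_ge0 => //; apply: mulr_ge0; lra.
have k2 : 0 <= x * (y * (B + E - A - V)) by apply: mulr_ge0 => //; apply: mulr_ge0; lra.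
nra.
Qed.

Lemma G_key n (t : R) (u v c : 'I_n -> R) : (0 < n)%N -> 0 <= t <= 1 ->
  (forall i, 0 <= u i <= 1) -> (forall i, 0 <= v i <= 1) ->
  (forall i, u i <= c i) -> (forall i, v i <= c i) -> (forall i, c i <= 1) ->
  copC t u * copC t v <= copC t (fun i => Num.min (u i) (v i)) * copC t c.
Proof.
move=> n0 ht hu hv uc vc c1.
have u0 i : 0 <= u i by case/andP: (hu i).
have v0 i : 0 <= v i by case/andP: (hv i).
have mu0 : 0 <= bm u by apply: bm_ge => //; lra.
have mv0 : 0 <= bm v by apply: bm_ge => //; lra.
have mcu : bm u <= bm c by apply: bm_ge => [|i]; [exact: bm_le1|exact: le_trans (bm_le u i) (uc i)].
have mcv : bm v <= bm c by apply: bm_ge => [|i]; [exact: bm_le1|exact: le_trans (bm_le v i) (vc i)].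
have mmin : Num.min (bm u) (bm v) <= bm (fun i => Num.min (u i) (v i)).
  apply: bm_ge => [|i]; first by rewrite ge_min bm_le1.
  by rewrite le_min !ge_min !bm_le ?orbT.
have Pmin0 : 0 <= pr (fun i => Num.min (u i) (v i)).
  by apply: prodr_ge0 => i _; rewrite le_min u0 v0.
have Pmax0 : 0 <= pr (fun i => Num.max (u i) (v i)).
  by apply: prodr_ge0 => i _; rewrite le_max u0.
have Pmaxc : pr (fun i => Num.max (u i) (v i)) <= pr c.
  by apply: ler_prod => i _; rewrite le_max u0 ge_max uc vc.
have Puv : pr u * pr v = pr (fun i => Num.min (u i) (v i)) * pr (fun i => Num.max (u i) (v i)).
  rewrite /pr -!big_split; apply: eq_bigr => i _ /=.
  by case: leP => _; rewrite // mulrC.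
have Pu0 : 0 <= pr u by apply: prodr_ge0.
have Pc0 : 0 <= pr c by apply: prodr_ge0 => i _; exact: le_trans (u0 i) (uc i).
have Pv0 : 0 <= pr v by apply: prodr_ge0.
have kc : pr u * bm v + pr v * bm u <=
   pr (fun i => Num.min (u i) (v i)) * bm c + pr c * bm (fun i => Num.min (u i) (v i)).
  have [muv|mvu] := leP (bm u) (bm v).
    have := cross n0 hu hv muv.
    rewrite (min_idPl muv) in mmin.
    move=> h; apply: (le_trans h); apply: lerD; [by apply: ler_wpM2l|].
    apply: (@le_trans _ _ (pr c * bm u)); [by apply: ler_wpM2r|by apply: ler_wpM2l].
  have := cross n0 hv hu (ltW mvu).
  rewrite (min_idPr (ltW mvu)) in mmin.
  have -> : pr (fun i => Num.min (v i) (u i)) = pr (fun i => Num.min (u i) (v i)).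
    by apply: eq_bigr => i _; rewrite minC.
  have -> : pr (fun i => Num.max (v i) (u i)) = pr (fun i => Num.max (u i) (v i)).
    by apply: eq_bigr => i _; rewrite maxC.
  move=> h; rewrite addrC; apply: (le_trans h); apply: lerD; [by apply: ler_wpM2l|].
  apply: (@le_trans _ _ (pr c * bm v)); [by apply: ler_wpM2r|by apply: ler_wpM2l].
have k1 : pr u * pr v <= pr (fun i => Num.min (u i) (v i)) * pr c.
  by rewrite Puv; exact: ler_wpM2l.
have k3 : bm u * bm v <= bm (fun i => Num.min (u i) (v i)) * bm c.
  have [muv|mvu] := leP (bm u) (bm v).
    rewrite (min_idPl muv) in mmin.
    by apply: ler_pM.
  rewrite (min_idPr (ltW mvu)) in mmin; rewrite mulrC.
  by apply: ler_pM.
rewrite /copC -/(pr u) -/(pr v) -/(pr c) -/(pr (fun i => Num.min (u i) (v i))).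
rewrite -/(bm u) -/(bm v) -/(bm c) -/(bm (fun i => Num.min (u i) (v i))).
have t0 : 0 <= t * t by nra.
have t1 : 0 <= t * (1 - t) by nra.
have t2 : 0 <= (1 - t) * (1 - t) by nra.
have := ler_wpM2l t0 k1; have := ler_wpM2l t1 kc; have := ler_wpM2l t2 k3.
move=> h3 h2 h1.
set a1 := pr u in h1 h2 h3 *. set a2 := pr v in h1 h2 h3 *.
set a3 := pr (fun i => Num.min (u i) (v i)) in h1 h2 h3 *.
set a4 := pr c in h1 h2 h3 *.
set b1 := bm u in h1 h2 h3 *. set b2 := bm v in h1 h2 h3 *.
set b3 := bm (fun i => Num.min (u i) (v i)) in h1 h2 h3 *.
set b4 := bm c in h1 h2 h3 *.
lra.
Qed.

End Alg.

Local Open Scope classical_set_scope.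
Local Open Scope ring_scope.
Section Clamp.
Variable R : realType.
Lemma cl01 (x : R) : 0 <= clamp01 x <= 1.
Proof. rewrite /clamp01 !maxEle !minEle; repeat case: ifP; move=> *; lra. Qed.
Lemma cl_mono (x y : R) : x <= y -> clamp01 x <= clamp01 y.
Proof. move=> h; rewrite /clamp01 !maxEle !minEle; repeat case: ifP; move=> *; lra. Qed.
Lemma cl_min (x y : R) : clamp01 (Num.min x y) = Num.min (clamp01 x) (clamp01 y).
Proof.
case: (leP x y) => h.
  by have := cl_mono h => /min_idPl ->.
by have := cl_mono (ltW h) => /min_idPr ->.
Qed.
Lemma cl1 : clamp01 (1 : R) = 1.
Proof. rewrite /clamp01 !maxEle !minEle; repeat case: ifP; move=> *; lra. Qed.
Lemma cl_lip (x e : R) : 0 <= e -> clamp01 x - e <= clamp01 (x - e).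
Proof. move=> h; rewrite /clamp01 !maxEle !minEle; repeat case: ifP; move=> *; lra. Qed.
Lemma posid (m M a : R) : Num.max (m - Num.max M a) 0 = Num.max (m - M) 0 - Num.max (Num.min m a - M) 0.
Proof. rewrite !maxEle !minEle; repeat case: ifP; move=> *; lra. Qed.
Lemma posid2 (a b : R) : Num.max (a - b) 0 = a - Num.min a b.
Proof. rewrite !maxEle !minEle; repeat case: ifP; move=> *; lra. Qed.
End Clamp.

Lemma copC_ext (R : realType) n (t : R) (f g : 'I_n -> R) :
  (forall i, f i = g i) -> copC t f = copC t g.
Proof.
move=> fg; rewrite /copC.
by congr (_ * _ + _ * _); apply: eq_bigr => i _; rewrite fg.
Qed.

Lemma copC_mono (R : realType) n (t : R) (f g : 'I_n -> R) : 0 <= t <= 1 ->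
  (forall i, 0 <= f i) -> (forall i, f i <= g i) -> copC t f <= copC t g.
Proof.
move=> ht f0 fg; rewrite /copC.
have t1 : 0 <= 1 - t by lra.
apply: lerD; apply: ler_wpM2l; try lra.
  by apply: ler_prod => i _; rewrite f0 fg.
apply: bm_ge => [|i]; first exact: bm_le1.
exact: le_trans (bm_le f i) (fg i).
Qed.

Section Meas.
Variables (R : realType) (d : measure_display) (T : measurableType d) (P : probability T R).
Variables (n : nat) (X : 'I_n -> {RV P >-> R}) (t : R).
Hypothesis n0 : (0 < n)%N.
Hypothesis ht : 0 <= t <= 1.
Hypothesis hdf : has_df X (copula_df (copC t)).

Definition pp (A : set T) := fine (P A).

Lemma PE A : measurable A -> P A = (pp A)%:E.
Proof. by move=> mA; rewrite /pp fineK // fin_num_measure. Qed.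

Lemma mset (Q : 'I_n -> set T) : (forall i, measurable (Q i)) ->
  measurable [set s | forall i, Q i s].
Proof.
move=> mQ.
have -> : [set s | forall i, Q i s] = \bigcap_(i in [set: 'I_n]) Q i.
  by apply/seteqP; split => s /= H i //; apply: H.
apply: fin_bigcap_measurable => //; exact: finite_finset.
Qed.

Lemma mle i (y : R) : measurable [set s | X i s <= y].
Proof.
have -> : [set s | X i s <= y] = X i @^-1` `]-oo, y] by apply/seteqP; split => s /=; rewrite in_itv.
exact: measurable_funPTI.
Qed.

Lemma mgt i (y : R) : measurable [set s | y < X i s].
Proof.
have -> : [set s | y < X i s] = X i @^-1` `]y, +oo[ by apply/seteqP; split => s /=; rewrite in_itv /= andbT.
exact: measurable_funPTI.
Qed.

Lemma mlt i (y : R) : measurable [set s | X i s < y].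
Proof.
have -> : [set s | X i s < y] = X i @^-1` `]-oo, y[ by apply/seteqP; split => s /=; rewrite in_itv.
exact: measurable_funPTI.
Qed.

Lemma pp_df y : pp [set s | forall i, X i s <= y i] = copC t (fun i => clamp01 (y i)).
Proof. by rewrite /pp hdf. Qed.


Section PartB.
Variable x : 'I_n -> R.

Definition Ak k (y : 'I_n -> R) :=
  [set s | forall i : 'I_n, X i s <= y i /\ ((i < k)%N -> x i < X i s)].

Definition Mk k := \big[Num.max/0]_(i < n | (i < k)%N) clamp01 (x i).

Definition Fk k (y : 'I_n -> R) :=
  t * \prod_(i < n) (if (i < k)%N then Num.max (clamp01 (y i) - clamp01 (x i)) 0
                     else clamp01 (y i))
  + (1 - t) * Num.max (bm (fun i => clamp01 (y i)) - Mk k) 0.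

Lemma mAk k y : measurable (Ak k y).
Proof.
apply: (@mset (fun i => [set s | X i s <= y i /\ ((i < k)%N -> x i < X i s)])) => i /=.
case: (i < k)%N.
  have -> : [set s | X i s <= y i /\ (true -> x i < X i s)] =
     [set s | X i s <= y i] `&` [set s | x i < X i s].
    by apply/seteqP; split => s /= [H1 H2]; split => //; apply: H2.
  exact: measurableI (mle _ _) (mgt _ _).
have -> : [set s | X i s <= y i /\ (false -> x i < X i s)] = [set s | X i s <= y i].
  by apply/seteqP; split => s /= [] //.
exact: mle.
Qed.

Lemma Ak0 y : pp (Ak 0 y) = Fk 0 y.
Proof.
have -> : Ak 0 y = [set s | forall i, X i s <= y i].
  by apply/seteqP; split => s /= H i; [case: (H i)|split].
rewrite pp_df /Fk /copC /Mk.
have -> : \big[Num.max/0]_(i < n | (i < 0)%N) clamp01 (x i) = 0 by rewrite big_pred0.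
rewrite subr0.
congr (_ * _ + _ * _); apply/esym/max_idPl.
by apply: bm_ge => // i; case/andP: (cl01 (y i)).
Qed.

Definition ymod k (hk : (k < n)%N) (y : 'I_n -> R) :=
  fun i => if i == Ordinal hk then Num.min (y i) (x i) else y i.

Lemma AkS k (hk : (k < n)%N) y :
  pp (Ak k.+1 y) = pp (Ak k y) - pp (Ak k (ymod hk y)).
Proof.
set i0 := Ordinal hk.
have sub : Ak k (ymod hk y) `<=` Ak k y.
  move=> s /= H i; have [H1 H2] := H i; split => //.
  move: H1; rewrite /ymod; case: eqP => // _ h.
  by apply: le_trans h _; rewrite ge_min lexx.
have -> : Ak k.+1 y = Ak k y `\` Ak k (ymod hk y).
  apply/seteqP; split => s /=.
    move=> H; split.
      move=> i; have [H1 H2] := H i; split => // ik; apply: H2; exact: ltnW.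
    move=> H'; have [H1 _] := H' i0; have [_ H2] := H i0.
    have := H2 (ltnSn k); move: H1; rewrite /ymod eqxx => h1 h2.
    have : X i0 s <= x i0 by apply: le_trans h1 _; rewrite ge_min lexx orbT.
    by rewrite leNgt h2.
  move=> [H H'] i; have [H1 H2] := H i; split => // ik.
  case: (ltnP i k) => ik'; first exact: H2.
  have ii0 : i = i0 by apply: val_inj => /=; apply/eqP; rewrite eqn_leq ik'; rewrite ltnS in ik; rewrite ik.
  subst i; case: (ltP (x i0) (X i0 s)) => // hle; exfalso; apply: H' => j.
  have [J1 J2] := H j; split => //; rewrite /ymod; case: eqP => // ->.
  by rewrite le_min H1 hle.
have mA := mAk k y; have mB := mAk k (ymod hk y).
rewrite /pp measureD // ?setIidr //; last by rewrite ltey_eq fin_num_measure.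
by rewrite fineB // fin_num_measure.
Qed.

Lemma MkS k (hk : (k < n)%N) : Mk k.+1 = Num.max (Mk k) (clamp01 (x (Ordinal hk))).
Proof.
have c0 i : 0 <= clamp01 (x i) by case/andP: (cl01 (x i)).
rewrite /Mk; apply: le_anti; apply/andP; split.
  apply: bmax_ge => [|i ik]; first by rewrite le_max bmax_lee.
  rewrite le_max; case: (ltnP i k) => ik'.
    by apply/orP; left; apply: (@bmax_le R _ _ (fun i : 'I_n => (i < k)%N) (fun i => clamp01 (x i))); rewrite ?mem_index_enum.
  have -> : i = Ordinal hk.
    by apply: val_inj => /=; apply/eqP; rewrite eqn_leq ik'; rewrite ltnS in ik; rewrite ik.
  by rewrite lexx orbT.
rewrite ge_max; apply/andP; split.
  apply: bmax_ge => [|i ik]; first exact: bmax_lee.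
  by apply: (@bmax_le R _ _ (fun i : 'I_n => (i < k.+1)%N) (fun i => clamp01 (x i))); rewrite ?mem_index_enum //= ltnS ltnW.
by apply: (@bmax_le R _ _ (fun i : 'I_n => (i < k.+1)%N) (fun i => clamp01 (x i))); rewrite ?mem_index_enum //= ltnS.
Qed.

Lemma bmS k (hk : (k < n)%N) y :
  bm (fun i => clamp01 (ymod hk y i)) =
  Num.min (bm (fun i => clamp01 (y i))) (clamp01 (x (Ordinal hk))).
Proof.
apply: le_anti; apply/andP; split.
  rewrite le_min; apply/andP; split.
    apply: bm_ge => [|i]; first exact: bm_le1.
    apply: le_trans (bm_le _ i) _; rewrite /ymod; case: eqP => // _.
    by rewrite cl_min ge_min lexx.
  apply: le_trans (bm_le _ (Ordinal hk)) _; rewrite /ymod eqxx.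
  by rewrite cl_min ge_min lexx orbT.
apply: bm_ge => [|i]; first by rewrite ge_min bm_le1.
rewrite /ymod; case: eqP => [->|_].
  by rewrite cl_min le_min !ge_min bm_le lexx !orbT.
by rewrite ge_min bm_le.
Qed.

Lemma FkS k (hk : (k < n)%N) y : Fk k.+1 y = Fk k y - Fk k (ymod hk y).
Proof.
set i0 := Ordinal hk.
rewrite /Fk MkS bmS.
rewrite (bigD1 i0) //= (bigD1 i0 (F := fun i => if (i < k)%N then _ else _)) //=.
rewrite (bigD1 i0 (F := fun i => if (i < k)%N then Num.max (clamp01 (ymod hk y i) - _) 0 else _)) //=.
rewrite ltnSn ltnn /ymod eqxx.
have hik i : i != i0 -> (i < k.+1)%N = (i < k)%N.
  move=> ii0; rewrite ltnS leq_eqVlt.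
  suff -> : (i == k :> nat) = false by [].
  by apply/negbTE; apply: contra ii0 => /eqP h; apply/eqP/val_inj.
have -> : \prod_(i < n | i != i0) (if (i < k)%N then Num.max (clamp01 (ymod hk y i) - clamp01 (x i)) 0
                     else clamp01 (ymod hk y i)) =
          \prod_(i < n | i != i0) (if (i < k)%N then Num.max (clamp01 (y i) - clamp01 (x i)) 0
                     else clamp01 (y i)).
  by apply: eq_bigr => i ii0; rewrite /ymod (negbTE ii0).
have -> : \prod_(i < n | i != i0) (if (i < k.+1)%N then Num.max (clamp01 (y i) - clamp01 (x i)) 0
                     else clamp01 (y i)) =
          \prod_(i < n | i != i0) (if (i < k)%N then Num.max (clamp01 (y i) - clamp01 (x i)) 0
                     else clamp01 (y i)).
  by apply: eq_bigr => i ii0; rewrite hik.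
rewrite (posid2 (clamp01 (y i0)) (clamp01 (x i0))) (posid (bm (fun i => clamp01 (y i)))) cl_min /i0.
ring.
Qed.

Lemma Ak_eq k : (k <= n)%N -> forall y, pp (Ak k y) = Fk k y.
Proof.
elim: k => [_ y|k IH hk y]; first exact: Ak0.
by rewrite (AkS hk) (FkS hk) !IH // ltnW.
Qed.

End PartB.


Lemma bm_const (K : nat) : bm (fun _ : 'I_K => (1 : R)) = 1.
Proof. by apply: le_anti; rewrite bm_le1 /=; apply: bm_ge. Qed.

Lemma copC1 : copC t (fun _ : 'I_n => (1 : R)) = 1.
Proof.
rewrite /copC -/(bm _) bm_const.
rewrite big1 //; ring.
Qed.

Lemma ev_pos (x : 'I_n -> R) :
  pp (gtEv (fun _ => 1) X x) = copC t (fun i => 1 - clamp01 (x i)).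
Proof.
set F := gtEv _ X x.
have -> : F = [set s | forall i, x i < X i s].
  by apply/seteqP; split => s /= H i; move: (H i); rewrite mul1r.
set A := Ak x n (fun _ => 1).
set B := [set s | forall i : 'I_n, X i s <= 1].
have mF : measurable [set s | forall i, x i < X i s] by apply: mset => i; exact: mgt.
have mA : measurable A by exact: mAk.
have mB : measurable B by apply: mset => i; exact: mle.
have PB : P B = 1%E.
  rewrite /B (hdf (fun _ => 1)) /copula_df.
  rewrite (@copC_ext R n t _ (fun _ => 1)); first by rewrite copC1.
  by move=> i; rewrite cl1.
have sAF : A `<=` [set s | forall i, x i < X i s].
  by move=> s /= H i; case: (H i) => _; apply.
have sD : [set s | forall i, x i < X i s] `\` A `<=` ~` B.
  move=> s /= [H1 H2] H3; apply: H2 => i; split => //.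
have PD : P ([set s | forall i, x i < X i s] `\` A) = 0%E.
  apply: le_anti; rewrite measure_ge0 andbT.
  apply: (@le_trans _ _ (P (~` B))).
    by apply: le_measure => //; rewrite inE //; [exact: measurableD|exact: measurableC].
  by rewrite probability_setC // PB subee.
have -> : pp [set s | forall i, x i < X i s] = pp A.
  set F' := [set s | forall i, x i < X i s] in mF PD sAF *.
  have h : P F' = (P (F' `\` A) + P (F' `&` A))%E
    := measureDI _ mF mA.
  by rewrite /pp h PD add0e setIidr.
rewrite (Ak_eq x (leqnn n)) /Fk /Mk cl1.
have -> : \prod_(i < n) (if (i < n)%N then Num.max (1 - clamp01 (x i)) 0 else 1) =
   \prod_(i < n) (1 - clamp01 (x i)).
  apply: eq_bigr => i _; rewrite ltn_ord; apply/max_idPl.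
  by case/andP: (cl01 (x i)) => _; rewrite subr_ge0.
rewrite /copC; congr (_ * _ + _ * _).
have hM : \big[Num.max/0]_(i < n | (i < n)%N) clamp01 (x i) <= 1.
  by apply: bmax_ge => // i _; case/andP: (cl01 (x i)).
rewrite (bm_const n); rewrite (max_idPl _); last by rewrite subr_ge0.
apply: le_anti; apply/andP; split.
  apply: bm_ge => [|i].
    by rewrite lerBlDr lerDl; apply: bmax_lee.
  apply: lerB => //.
  by apply: (@bmax_le R _ _ (fun i : 'I_n => (i < n)%N) (fun i => clamp01 (x i))); rewrite ?mem_index_enum.
rewrite lerBrDr -lerBrDl.
apply: bmax_ge => [|i _]; first by rewrite subr_ge0 bm_le1.
rewrite lerBrDr -lerBrDl.
exact: (bm_le (fun i => 1 - clamp01 (x i)) i).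
Qed.


Lemma prod_lip (I : Type) (r : seq I) (Q : pred I) (u w : I -> R) e : 0 <= e ->
  (forall i, 0 <= u i <= 1) -> (forall i, 0 <= w i <= 1) -> (forall i, u i - e <= w i) ->
  [/\ \prod_(i <- r | Q i) u i - \prod_(i <- r | Q i) w i <= (size r)%:R * e,
      0 <= \prod_(i <- r | Q i) u i, \prod_(i <- r | Q i) u i <= 1,
      0 <= \prod_(i <- r | Q i) w i & \prod_(i <- r | Q i) w i <= 1].
Proof.
move=> e0 hu hw huw; elim: r => [|a r [IH1 IH2 IH3 IH4 IH5]].
  by rewrite !big_nil subrr mul0r; split => //; lra.
rewrite !big_cons /=.
move: IH1 IH2 IH3 IH4 IH5.
move: (\prod_(i <- r | Q i) u i) (\prod_(i <- r | Q i) w i) => U V IH1 IH2 IH3 IH4 IH5.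
have hS : (size r).+1%:R * e = (size r)%:R * e + e by rewrite -addn1 natrD mulrDl mul1r.
rewrite hS; have := hu a; have := hw a; have := huw a.
move: (u a) (w a) => p q h1 /andP[q0 q1] /andP[p0 p1].
case: ifP => _; last by split => //; lra.
have k0 : 0 <= (size r)%:R * e by apply: mulr_ge0.
split; [|exact: mulr_ge0| |exact: mulr_ge0|].
- have k1 : p * (U - V) <= (size r)%:R * e.
    case: (leP U V) => h; first by nra.
    by apply: le_trans (ler_piMl _ p1) IH1; lra.
  have k2 : (p - q) * V <= e by nra.
  nra.
- by rewrite -(mul1r 1); apply: ler_pM.
- by rewrite -(mul1r 1); apply: ler_pM.
Qed.

Lemma copC_lip (u w : 'I_n -> R) e : 0 <= e ->
  (forall i, 0 <= u i <= 1) -> (forall i, 0 <= w i <= 1) -> (forall i, u i - e <= w i) ->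
  copC t u - copC t w <= ((size (index_enum 'I_n)).+1)%:R * e.
Proof.
move=> e0 hu hw huw.
have [h1 _ _ _ _] := prod_lip (index_enum 'I_n) xpredT e0 hu hw huw.
have hm : bm u - e <= bm w.
  apply: bm_ge => [|i]; first by have := bm_le1 u; lra.
  by have := bm_le u i; have := huw i; lra.
rewrite /copC -/(bm u) -/(bm w).
move: h1; rewrite -/(pr u) -/(pr w).
have -> : (size (index_enum 'I_n)).+1%:R * e = (size (index_enum 'I_n))%:R * e + e.
  by rewrite -addn1 natrD mulrDl mul1r.
have K0 : 0 <= (size (index_enum 'I_n))%:R * e by apply: mulr_ge0.
move: ((size (index_enum 'I_n))%:R * e) K0 => K K0 h1.
have t0 : 0 <= t by case/andP: ht.
have t1 : t <= 1 by case/andP: ht.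
have k1 : 0 <= t * (K - (pr u - pr w)) by apply: mulr_ge0; lra.
have k2 : 0 <= (1 - t) * (bm w - bm u + e) by apply: mulr_ge0; lra.
have k3 : 0 <= (1 - t) * K by apply: mulr_ge0; lra.
have k4 : 0 <= t * e by apply: mulr_ge0; lra.
nra.
Qed.

Lemma ev_neg (x : 'I_n -> R) :
  pp (gtEv (fun _ => -1) X x) = copC t (fun i => clamp01 (- x i)).
Proof.
set F := gtEv _ X x.
have -> : F = [set s | forall i, X i s < - x i].
  by apply/seteqP; split => s /= H i; move: (H i); rewrite mulN1r ltrNr.
have mF : measurable [set s | forall i, X i s < - x i] by apply: mset => i; exact: mlt.
apply: le_anti; apply/andP; split.
  rewrite -pp_df.
  set B := [set s | forall i, X i s <= - x i].
  set F' := [set s | forall i, X i s < - x i] in mF *.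
  have mB : measurable B by apply: mset => i; exact: mle.
  have : (P F' <= P B)%E.
    by apply: le_measure; rewrite ?inE // => s /= H i; apply: ltW.
  by rewrite (PE mF) (PE mB) lee_fin.
apply/ler_addgt0Pr => e e0.
set K := ((size (index_enum 'I_n)).+1)%:R : R.
have K0 : 0 < K by rewrite /K ltr0n.
set e' := e / K.
have e'0 : 0 < e' by apply: divr_gt0.
have Ke : K * e' = e by rewrite /e' mulrC -mulrA mulVf ?mulr1 // gt_eqF.
set B := [set s | forall i, X i s <= - x i - e'].
set F' := [set s | forall i, X i s < - x i] in mF *.
have mB : measurable B by apply: mset => i; exact: mle.
have : (P B <= P F')%E.
  apply: le_measure; rewrite ?inE // => s /= H i.
  by apply: le_lt_trans (H i) _; rewrite ltrBlDr ltrDl.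
rewrite (PE mF) (PE mB) lee_fin pp_df => h.
have := @copC_lip (fun i => clamp01 (- x i)) (fun i => clamp01 (- x i - e')) e' (ltW e'0)
  (fun i => cl01 _) (fun i => cl01 _) (fun i => cl_lip _ (ltW e'0)).
rewrite -/K Ke => h'.
lra.
Qed.


Lemma final (Ev : ('I_n -> R) -> set T) (W : ('I_n -> R) -> 'I_n -> R) :
  (forall x, measurable (Ev x)) ->
  (forall x x', Ev x `&` Ev x' = Ev (fun i => Num.max (x i) (x' i))) ->
  (forall x, pp (Ev x) = copC t (W x)) -> (forall x i, 0 <= W x i <= 1) ->
  (forall x x' i, W (fun j => Num.max (x j) (x' j)) i = Num.min (W x i) (W x' i)) ->
  (forall x' x'', (forall i, x' i <= x'' i) -> forall i, W x'' i <= W x' i) ->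
  forall x x' x'', (forall i, x' i <= x'' i) -> (0 < P (Ev x''))%E ->
  condP P (Ev x) (Ev x') <= condP P (Ev x) (Ev x'').
Proof.
move=> mE hI hG hW hWm hWa x x' x'' le' pos.
rewrite /condP !hI.
have hG' z : fine (P (Ev z)) = copC t (W z) by exact: hG.
rewrite !hG'.
rewrite (@copC_ext R n t _ (fun i => Num.min (W x i) (W x' i))) //.
rewrite (@copC_ext R n t (W (fun i => Num.max (x i) (x'' i))) (fun i => Num.min (W x i) (W x'' i))) //.
have b2p : 0 < copC t (W x'').
  by move: pos; rewrite (PE (mE x'')) lte_fin hG.
have bb : copC t (W x'') <= copC t (W x').
  apply: copC_mono => // [i|i]; first by case/andP: (hW x'' i).
  exact: hWa.
have bp : 0 < copC t (W x') by apply: lt_le_trans bb.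
have key := @G_key R n t (fun i => Num.min (W x i) (W x' i)) (W x'') (W x') n0 ht.
have h1 i : 0 <= Num.min (W x i) (W x' i) <= 1.
  by rewrite le_min ge_min; case/andP: (hW x i) => -> ->; case/andP: (hW x' i) => ->.
have h2 i : Num.min (W x i) (W x' i) <= W x' i by rewrite ge_min lexx orbT.
have h3 i : W x' i <= 1 by case/andP: (hW x' i).
have := key h1 (hW x'') h2 (hWa _ _ le') h3.
rewrite (@copC_ext R n t (fun i => Num.min (Num.min (W x i) (W x' i)) (W x'' i))
   (fun i => Num.min (W x i) (W x'' i))); last first.
  move=> i; have := hWa _ _ le' i; rewrite !minEle; repeat case: ifP; move=> *; lra.
move=> hk.
rewrite ler_pdivrMr // mulrAC ler_pdivlMr //.
Qed.

End Meas.

Lemma cl_max (R : realType) (x y : R) : clamp01 (Num.max x y) = Num.max (clamp01 x) (clamp01 y).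
Proof.
case: (leP x y) => h.
  by have := cl_mono h => /max_idPr ->.
by have := cl_mono (ltW h) => /max_idPl ->.
Qed.

Unset Implicit Arguments.
Theorem mainTheorem9 (R : realType) (n : nat) (theta : R) :
  (2 <= n)%N -> 0 <= theta -> theta <= 1 ->
  @copula_I_alpha R n (copC theta) (fun _ => 1) /\
  @copula_I_alpha R n (copC theta) (fun _ => -1).
Proof.
move=> n2 t0 t1.
have n0 : (0 < n)%N by apply: leq_trans n2.
have ht : 0 <= theta <= 1 by rewrite t0 t1.
split => d T P X hdf x x' x'' le' pos.
- apply: (final n0 ht (Ev := gtEv (fun _ => 1) X) (W := fun x i => 1 - clamp01 (x i))) => //.
  + move=> z; rewrite /gtEv /=; apply: mset => i /=.
    rewrite (_ : (fun s : T => _) = [set s | z i < X i s]); first exact: mgt.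
    by apply/funext => s /=; rewrite mul1r.
  + move=> z z'; apply/seteqP; split => s /=.
      by move=> [H H'] i; rewrite gt_max H H'.
    by move=> H; split => i; have := H i; rewrite gt_max => /andP[].
  + by move=> z; exact: (ev_pos hdf).
  + by move=> z i; have := cl01 (z i); lra.
  + move=> z z' i; rewrite cl_max.
    have := cl01 (z i); have := cl01 (z' i).
    move: (clamp01 (z i)) (clamp01 (z' i)) => a b ha hb.
    rewrite !maxEle !minEle; repeat case: ifP; move=> *; lra.
  + by move=> z z' hz i; have := cl_mono (hz i); lra.
- apply: (final n0 ht (Ev := gtEv (fun _ => -1) X) (W := fun x i => clamp01 (- x i))) => //.
  + move=> z; rewrite /gtEv /=; apply: mset => i /=.
    rewrite (_ : (fun s : T => _) = [set s | X i s < - z i]); first exact: mlt.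
    by apply/funext => s /=; rewrite mulN1r ltrNr.
  + move=> z z'; apply/seteqP; split => s /=.
      by move=> [H H'] i; rewrite gt_max H H'.
    by move=> H; split => i; have := H i; rewrite gt_max => /andP[].
  + by move=> z; apply: ev_neg.
  + by move=> z i; exact: cl01.
  + move=> z z' i; rewrite -cl_min; congr clamp01.
    rewrite !maxEle !minEle; repeat case: ifP; move=> *; lra.
  + by move=> z z' hz i; apply: cl_mono; rewrite lerN2.
Qed.
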